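(* Let $\mathscr{A}\in\mathbb{R}^{n_1\times n_2\times n_3}$, $\mathscr{B}\in\mathbb{R}^{n_1\times s\times n_3}$, and suppose $k$ steps of the tensor tubal-global Golub–Kahan algorithm described in the context have been run (without breakdown). Then $$\mathscr{A}\star\mathbb{V}_k=\mathbb{U}_{k+1}\star(\widetilde{\mathscr{C}}_k\circledast\mathscr{I}_{ssn_3})=\mathbb{U}_k\star(\mathscr{C}_k\circledast\mathscr{I}_{ssn_3})+\mathscr{U}_{k+1}\star((\mathbf{a}_{k+1}\star\mathscr{E}_k)\circledast\mathscr{I}_{ssn_3}),$$ $$\mathscr{A}^T\star\mathbb{U}_k=\mathbb{V}_k\star(\mathscr{C}_k^T\circledast\mathscr{I}_{ssn_3}),\qquad \mathscr{B}=\mathbb{U}_{k+1}\star((\mathscr{E}_1^{(k+1)}\star\mathbf{a}_1)\circledast\mathscr{I}_{ssn_3}).$$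
   Context: All tensors are real third-order arrays. $\widehat{\mathscr{A}}=\mathscr{A}\times_3F_{n_3}$ denotes the tensor obtained by applying the discrete Fourier transform ($F_{n_3}$ with entries $\omega^{(i-1)(j-1)}$, $\omega=e^{-2\pi\mathrm{i}/n_3}$) to each tube; its frontal slices $\hat A^{(k)}$ are the Fourier slices. T-product: $\mathscr{A}\star\mathscr{B}$ has Fourier slices $\hat A^{(k)}\hat B^{(k)}$. Transpose $\mathscr{A}^T$: transpose each frontal slice and reverse the order of frontal slices $2,\dots,n_3$. $\mathscr{I}_{ssn_3}$: first frontal slice $I_s$, others zero. T-Kronecker product $\mathscr{A}\circledast\mathscr{B}$: Fourier slices $\hat A^{(k)}\otimes\hat B^{(k)}$. A tube is an element of $\mathbb{R}^{1\times1\times n_3}$; $\mathbf{e}$ has entries $(1,0,\dots,0)$, $\mathbf{o}$ is the zero tube. For a tube $\mathbf{a}$, $\mathbf{a}\divideontimes\mathscr{W}$ has $(i,j)$ tube $\mathbf{a}\star\mathscr{W}(i,j,:)$. Normalization of $\mathscr{W}$: $\mathbf{a}$ is the tube with $k$-th Fourier coefficient $\|\hat W^{(k)}\|_F$ (breakdown if one is zero) and $\mathscr{Q}$ has Fourier slices $\hat W^{(k)}/\|\hat W^{(k)}\|_F$; output $[\mathscr{Q},\mathbf{a}]$. Tubal-global Golub–Kahan algorithm: $\mathscr{V}_0=0\in\mathbb{R}^{n_2\times s\times n_3}$, $[\mathscr{U}_1,\mathbf{a}_1]=\mathrm{Normalization}(\mathscr{B})$; for $j=1,\dots,k$: $\widetilde{\mathscr{V}}=\mathscr{A}^T\star\mathscr{U}_j-\mathbf{a}_j\divideontimes\mathscr{V}_{j-1}$,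 $[\mathscr{V}_j,\mathbf{b}_j]=\mathrm{Normalization}(\widetilde{\mathscr{V}})$, $\widetilde{\mathscr{U}}=\mathscr{A}\star\mathscr{V}_j-\mathbf{b}_j\divideontimes\mathscr{U}_j$, $[\mathscr{U}_{j+1},\mathbf{a}_{j+1}]=\mathrm{Normalization}(\widetilde{\mathscr{U}})$. Notation: $\mathbb{V}_k=[\mathscr{V}_1,\dots,\mathscr{V}_k]\in\mathbb{R}^{n_2\times ks\times n_3}$, $\mathbb{U}_k=[\mathscr{U}_1,\dots,\mathscr{U}_k]$, $\mathbb{U}_{k+1}=[\mathbb{U}_k,\mathscr{U}_{k+1}]$ (concatenation along mode 2). $\widetilde{\mathscr{C}}_k\in\mathbb{R}^{(k+1)\times k\times n_3}$ is the bidiagonal tensor whose $(j,j)$ tube is $\mathbf{b}_j$, whose $(j+1,j)$ tube is $\mathbf{a}_{j+1}$ ($j=1,\dots,k$), and all other tubes are $\mathbf{o}$; $\mathscr{C}_k\in\mathbb{R}^{k\times k\times n_3}$ is obtained by deleting its last horizontal slice. $\mathscr{E}_k=[\mathbf{o},\dots,\mathbf{o},\mathbf{e}]\in\mathbb{R}^{1\times k\times n_3}$ and $\mathscr{E}_1^{(k+1)}=[\mathbf{e};\mathbf{o};\dots;\mathbf{o}]\in\mathbb{R}^{(k+1)\times1\times n_3}$. *)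

(* Defs.v *)
From mathcomp Require Import all_boot all_algebra.
From mathcomp Require Import reals trigo.
From mathcomp.real_closed Require Import complex mxtens.

Set Implicit Arguments.
Unset Strict Implicit.
Unset Printing Implicit Defensive.

Import GRing.Theory Num.Theory.
Local Open Scope ring_scope.

Section Tensors.
Variable R : realType.
Local Notation C := R[i].

(* real third-order tensors of size n1 x n2 x n3 : A i j l = A(i,j,l) (0-based) *)
Definition tensor (n1 n2 n3 : nat) := 'I_n1 -> 'I_n2 -> 'I_n3 -> R.
Definition tube (n3 : nat) := tensor 1 1 n3.

Definition tzero n1 n2 n3 : tensor n1 n2 n3 := fun _ _ _ => 0.
Definition tadd n1 n2 n3 (X Y : tensor n1 n2 n3) : tensor n1 n2 n3 :=
  fun i j l => X i j l + Y i j l.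
Definition tsub n1 n2 n3 (X Y : tensor n1 n2 n3) : tensor n1 n2 n3 :=
  fun i j l => X i j l - Y i j l.

(* omega = exp(-2 pi i / n) *)
Definition omega (n : nat) : C :=
  Complex (cos (2 * pi / n%:R)) (- sin (2 * pi / n%:R)).

Definition cplx (x : R) : C := Complex x 0.

Definition tfft n1 n2 n3 (X : tensor n1 n2 n3) (k : 'I_n3) : 'M[C]_(n1, n2) :=
  \matrix_(i, j) \sum_(l < n3) omega n3 ^+ (k * l) * cplx (X i j l).

(* inverse DFT along the tubes; the result is real whenever the family of
   Fourier slices is the DFT of a real tensor; we keep its real part. *)
Definition tifft n1 n2 n3 (F : 'I_n3 -> 'M[C]_(n1, n2)) : tensor n1 n2 n3 :=
  fun i j l => complex.Re ((n3%:R)^-1 * \sum_(k < n3) (omega n3 ^+ (k * l))^-1 * F k i j).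

Definition tprod n1 n2 n3 n4 (X : tensor n1 n2 n4) (Y : tensor n2 n3 n4)
  : tensor n1 n3 n4 := tifft (fun k => tfft X k *m tfft Y k).

(* reversal of frontal slices 2..n3 : 0 |-> 0, l |-> n3 - l *)
Definition tidx n (l : 'I_n) : 'I_n := insubd l (n - l)%N.

Definition ttr n1 n2 n3 (X : tensor n1 n2 n3) : tensor n2 n1 n3 :=
  fun i j l => X j i (tidx l).

Definition tid (s n3 : nat) : tensor s s n3 :=
  fun i j l => ((i == j) && (l == 0 :> nat))%:R.

Definition etube (n3 : nat) : tube n3 := fun _ _ l => (l == 0 :> nat)%:R.

Definition tkron m1 m2 p1 p2 n3 (X : tensor m1 m2 n3) (Y : tensor p1 p2 n3)
  : tensor (m1 * p1) (m2 * p2) n3 :=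
  tifft (fun k => tensmx (tfft X k) (tfft Y k)).

Definition tdivt m n n3 (a : tube n3) (W : tensor m n n3) : tensor m n n3 :=
  fun i j l => tprod a (fun (_ : 'I_1) (_ : 'I_1) => W i j) ord0 ord0 l.

Definition frob m n (M : 'M[C]_(m, n)) : C :=
  sqrtC (\sum_(i < m) \sum_(j < n) `|M i j| ^+ 2).

Definition normalization m n n3 (W : tensor m n n3) : tensor m n n3 * tube n3 :=
  (tifft (fun k => (frob (tfft W k))^-1 *: tfft W k),
   tifft (fun k => (frob (tfft W k))%:M)).

Definition nobreak m n n3 (W : tensor m n n3) : Prop :=
  forall k : 'I_n3, frob (tfft W k) != 0.

(* concatenation along mode 2: [F_0, ..., F_(p-1)], block j, column c <-> j*s+c *)
Definition bcat m s n3 p (F : 'I_p -> tensor m s n3) : tensor m (p * s) n3 :=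
  fun i q l => F (mxtens_unindex q).1 i (mxtens_unindex q).2 l.

Definition castc m n n' n3 (e : n = n') (X : tensor m n n3) : tensor m n' n3 :=
  fun i j l => X i (cast_ord (esym e) j) l.
Definition castr m m' n n3 (e : m = m') (X : tensor m n n3) : tensor m' n n3 :=
  fun i j l => X (cast_ord (esym e) i) j l.

(* bidiagonal tensor tilde C_k ((k+1) x k): (j,j) tube b_j, (j+1,j) tube a_(j+1)
   (1-based); sequences a b are indexed by their 1-based indices. *)
Definition Ctil n3 (k : nat) (a b : nat -> tube n3) : tensor k.+1 k n3 :=
  fun i j l => if i == j :> nat then b j.+1 ord0 ord0 l
               else if i == j.+1 :> nat then a j.+2 ord0 ord0 l else 0.

Definition Cmat n3 (k : nat) (a b : nat -> tube n3) : tensor k k n3 :=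
  fun i j l => @Ctil n3 k a b (widen_ord (leqnSn k) i) j l.

Definition Ek (k n3 : nat) : tensor 1 k n3 :=
  fun _ j l => if j == k.-1 :> nat then @etube n3 ord0 ord0 l else 0.

Definition E1 (k n3 : nat) : tensor k.+1 1 n3 :=
  fun i _ l => if i == 0 :> nat then @etube n3 ord0 ord0 l else 0.

(* k steps of the tubal-global Golub-Kahan algorithm, without breakdown.
   U j = U_j, V j = V_j, a j = a_j, b j = b_j (1-based; V 0 = V_0). *)
Definition GK_run n1 n2 n3 s (A : tensor n1 n2 n3) (B : tensor n1 s n3) (k : nat)
  (U : nat -> tensor n1 s n3) (V : nat -> tensor n2 s n3) (a b : nat -> tube n3)
  : Prop :=
  [/\ V 0%N = @tzero n2 s n3,
      nobreak B,
      (U 1%N, a 1%N) = normalization B &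
      forall j : nat, (1 <= j <= k)%N ->
        let Vt := tsub (tprod (ttr A) (U j)) (tdivt (a j) (V j.-1)) in
        nobreak Vt /\ (V j, b j) = normalization Vt /\
        let Ut := tsub (tprod A (V j)) (tdivt (b j) (U j)) in
        nobreak Ut /\ (U j.+1, a j.+1) = normalization Ut].

End Tensors.

(* Main.v *)
Require Import Defs.
From mathcomp Require Import all_boot all_order all_algebra.
From mathcomp Require Import reals trigo boolp.
From mathcomp.real_closed Require Import complex mxtens.
From mathcomp Require Import ring zify.
Set Implicit Arguments.
Unset Strict Implicit.
Unset Printing Implicit Defensive.
Import Order.TTheory GRing.Theory Num.Theory.
Local Open Scope ring_scope.

Lemma mulACl (T : comPzRingType) (a b c : T) : a * (b * c) = c * (a * b).
Proof. by rewrite mulrA mulrC. Qed.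

Section Omega.
Variable R : realType.
Variable n : nat.
Local Notation C := R[i].
Local Notation N := n.+1.
Local Notation w := (omega R N).
Local Notation th := (2 * pi / N%:R : R).

Lemma omegaX m : w ^+ m = Complex (cos (m%:R * th)) (- sin (m%:R * th)).
Proof.
elim: m => [|m IH]; first by rewrite expr0 mul0r cos0 sin0 oppr0.
have e : (m.+1)%:R * th = m%:R * th + th by rewrite -(@natr1 R m) mulrDl mul1r.
rewrite exprSr IH /omega e cosD sinD.
rewrite -[(_ +i* _)%C * (_ +i* _)%C]/(_ +i* _)%C.
congr Complex; ring.
Qed.

Lemma omegaN : w ^+ N = 1.
Proof.
rewrite omegaX mulrCA mulfV ?pnatr_eq0 // mulr1.
have -> : (2 : R) * pi = pi *+ 2 by rewrite mulrC mulr_natr.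
by rewrite cos2pi sin2pi oppr0.
Qed.

Lemma cos_lt1 (y : R) : 0 < y <= pi -> cos y < 1.
Proof.
move=> /andP[y0 ypi]; have pi0 := pi_gt0 R.
rewrite -cos0 ltr_cos // !in_itv /=; first by rewrite lexx (ltW pi0).
by rewrite (ltW y0) ypi.
Qed.

Lemma omega_neq1 m : (0 < m < N)%N -> w ^+ m != 1.
Proof.
move=> /andP[m0 mN]; rewrite omegaX; apply/negP => /eqP [] c1 _.
set x := m%:R * th in c1.
have pi0 := pi_gt0 R.
have x0 : 0 < x by rewrite /x mulr_gt0 ?ltr0n // divr_gt0 ?mulr_gt0 ?ltr0n.
have x2 : x < pi *+ 2.
  have -> : x = (pi *+ 2) * (m%:R / N%:R).
    by rewrite /x -[pi *+ 2]mulr_natl; ring.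
  rewrite gtr_pMr; last by rewrite mulrn_wgt0.
  by rewrite ltr_pdivrMr ?ltr0n // mul1r ltr_nat.
case: (lerP x pi) => xpi.
  by move: (cos_lt1 (y:=x)); rewrite x0 xpi c1 ltxx => /(_ isT).
have : cos (pi *+ 2 - x) < 1 by rewrite cos_lt1 // subr_gt0 x2 /= lerBlDr -lerBlDl mulr2n addrK ltW.
by rewrite addrC cosD2pi cosN c1 ltxx.
Qed.

Lemma omega_conj : w * conjc w = 1.
Proof.
rewrite /omega -[conjc _]/(Complex _ _) opprK.
rewrite -[(_ +i* _)%C * (_ +i* _)%C]/(_ +i* _)%C.
have h := cos2Dsin2 th.
congr Complex; last by ring.
by rewrite mulNr opprK -!expr2 h.
Qed.

Lemma omega_neq0 : w != 0.
Proof. by apply/negP => /eqP h; move: omega_conj; rewrite h mul0r => /eqP; rewrite eq_sym oner_eq0. Qed.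

Lemma omegaXV m : conjc (w ^+ m) = (w ^+ m)^-1.
Proof.
rewrite rmorphXn -exprVn; congr (_ ^+ _).
by apply: (mulfI omega_neq0); rewrite omega_conj mulfV ?omega_neq0.
Qed.

Lemma omega_inj (a b : nat) : (a < N)%N -> (b < N)%N -> w ^+ a = w ^+ b -> a = b.
Proof.
wlog ab : a b / (a <= b)%N.
  move=> H aN bN e; case: (leqP a b) => h; first exact: H.
  by apply/esym/H => //; apply: ltnW.
move=> aN bN e; apply/eqP; rewrite eqn_leq ab /=; apply/negP => ba.
have h : w ^+ (b - a) = 1.
  apply: (mulfI (expf_neq0 a omega_neq0)); rewrite -exprD subnKC // mulr1 e //.
by move: (omega_neq1 (m := b - a)); rewrite h eqxx subn_gt0 ltn_neqAle ab /=; lia.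
Qed.

Lemma omega_orth (a b : 'I_N) :
  \sum_(k < N) w ^+ (k * a) * (w ^+ (k * b))^-1 = (a == b)%:R * N%:R.
Proof.
set z := w ^+ a / w ^+ b.
have e k : w ^+ (k * a) * (w ^+ (k * b))^-1 = z ^+ k.
  by rewrite /z exprMn exprVn -!exprM !(mulnC k).
under eq_bigr do rewrite e.
have wa : w ^+ a != 0 by rewrite expf_neq0 // omega_neq0.
have wb : w ^+ b != 0 by rewrite expf_neq0 // omega_neq0.
case: eqP => [ab|nab].
  rewrite /z ab divff // mul1r.
  under eq_bigr do rewrite expr1n.
  by rewrite sumr_const card_ord.
rewrite mul0r.
have zN : z ^+ N = 1 by rewrite /z exprMn exprVn -!exprM !(mulnC _ N) !exprM omegaN !expr1n invr1 mulr1.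
have z1 : z - 1 != 0.
  rewrite subr_eq0; apply/negP => /eqP h; apply: nab; apply: val_inj.
  have : w ^+ a = w ^+ b.
    by move: h; rewrite /z => /(congr1 (fun t => t * w ^+ b)); rewrite mul1r divfK.
  exact: omega_inj.
move: (subrX1 z N); rewrite zN subrr => /esym/eqP.
by rewrite mulf_eq0 (negbTE z1) /= => /eqP.
Qed.

Lemma tidx_val (k : 'I_N) : val (tidx k) = if val k == 0%N then 0%N else (N - k)%N.
Proof.
have kN := ltn_ord k.
rewrite /tidx /insubd; case: insubP => [u H -> |] /=.
  by case: eqP => // k0; move: H; rewrite k0 subn0 ltnn.
by case: eqP => [-> //| k0]; move/negP; case; lia.
Qed.

Lemma omega_tidx (a : 'I_N) b : w ^+ (tidx a * b) = (w ^+ (a * b))^-1.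
Proof.
have wab : w ^+ (a * b) != 0 by rewrite expf_neq0 // omega_neq0.
apply: (mulIf wab); rewrite mulVf // -exprD -mulnDl tidx_val.
case: eqP => [-> | _]; first by rewrite mul0n expr0.
by rewrite subnK ?(ltnW (ltn_ord a)) // exprM omegaN expr1n.
Qed.

Lemma tidxK : involutive (@tidx N).
Proof.
move=> k; apply: val_inj; rewrite !tidx_val; have kN := ltn_ord k.
case: (eqVneq (val k) 0%N) => [->|k0] //=.
have -> : (N - k == 0)%N = false by apply/negbTE; rewrite subn_eq0 -ltnNge.
by rewrite subKn // ltnW.
Qed.

Lemma cplxD (x y : R) : cplx (x + y) = cplx x + cplx y.
Proof. by rewrite /cplx -[_ + Complex _ _]/(Complex _ _) addr0. Qed.
Lemma cplxN (x : R) : cplx (- x) = - cplx x.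
Proof. by rewrite /cplx -[- Complex _ _]/(Complex _ _) oppr0. Qed.
Lemma cplxB (x y : R) : cplx (x - y) = cplx x - cplx y.
Proof. by rewrite cplxD cplxN. Qed.
Lemma cplxM (x y : R) : cplx (x * y) = cplx x * cplx y.
Proof. by rewrite /cplx -[Complex _ _ * Complex _ _]/(Complex _ _) !mulr0 mul0r subr0 addr0. Qed.
Lemma cplx0 : cplx 0 = 0 :> C. Proof. by []. Qed.
Lemma cplx1 : cplx 1 = 1 :> C. Proof. by []. Qed.
Lemma cplx_conj (x : R) : conjc (cplx x) = cplx x.
Proof. by rewrite /cplx -[conjc _]/(Complex _ _) oppr0. Qed.
Lemma cplx_sum I (r : seq I) (P : pred I) (F : I -> R) :
  cplx (\sum_(i <- r | P i) F i) = \sum_(i <- r | P i) cplx (F i).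
Proof. by elim/big_rec2: _ => // i y1 y2 _ <-; rewrite cplxD. Qed.

Lemma conjcM (x y : C) : conjc (x * y) = conjc x * conjc y.
Proof. exact: rmorphM. Qed.
Lemma conjcD (x y : C) : conjc (x + y) = conjc x + conjc y.
Proof. exact: rmorphD. Qed.
Lemma conjc_sum I (r : seq I) (P : pred I) (F : I -> C) :
  conjc (\sum_(i <- r | P i) F i) = \sum_(i <- r | P i) conjc (F i).
Proof. by elim/big_rec2: _ => [|i y1 y2 _ <-]; rewrite ?conjc0 ?conjcD. Qed.

Lemma conj_fix (z : C) : conjc z = z -> cplx (complex.Re z) = z.
Proof.
case: z => x y /= [] h; rewrite /cplx; congr Complex.
have : y + y = 0 by rewrite -{1}h addNr.
by rewrite -mulr2n -mulr_natr => /eqP; rewrite mulf_eq0 pnatr_eq0 orbF => /eqP.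
Qed.

Lemma conj_natV : conjc ((N%:R : C)^-1) = N%:R^-1.
Proof. by rewrite conjc_inv conjc_nat. Qed.

Lemma NC0 : (N%:R : C) != 0. Proof. by rewrite pnatr_eq0. Qed.

Definition dft (f : 'I_N -> R) (k : 'I_N) : C :=
  \sum_(l < N) w ^+ (k * l) * cplx (f l).

Lemma inv1 (f : 'I_N -> R) (l : 'I_N) :
  complex.Re ((N%:R)^-1 * \sum_(k < N) (w ^+ (k * l))^-1 * dft f k) = f l.
Proof.
have -> : \sum_(k < N) (w ^+ (k * l))^-1 * dft f k =
          \sum_(l' < N) cplx (f l') * \sum_(k < N) w ^+ (k * l') * (w ^+ (k * l))^-1.
  rewrite /dft; under eq_bigr do rewrite mulr_sumr.
  rewrite exchange_big /=; apply: eq_bigr => l' _; rewrite mulr_sumr.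
  by apply: eq_bigr => k _; rewrite mulrA mulrC; congr (_ * _); rewrite mulrC.
rewrite (eq_bigr (fun l' => cplx (f l') * ((l' == l)%:R * N%:R))); last first.
  by move=> l' _; rewrite omega_orth.
rewrite (bigD1 l) //= eqxx big1 ?addr0; last first.
  by move=> l' /negbTE ->; rewrite mul0r mulr0.
by rewrite mul1r mulrCA mulVf ?NC0 // mulr1.
Qed.

Lemma inv2 (F : 'I_N -> C) : (forall k, F (tidx k) = conjc (F k)) ->
  let G := fun l : 'I_N => (N%:R)^-1 * \sum_(k < N) (w ^+ (k * l))^-1 * F k in
  (forall l, cplx (complex.Re (G l)) = G l) /\
  (forall k : 'I_N, \sum_(l < N) w ^+ (k * l) * G l = F k).
Proof.
move=> sF G; split.
  move=> l; apply: conj_fix; rewrite /G conjcM conj_natV conjc_sum; congr (_ * _).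
  rewrite (reindex_inj (can_inj tidxK)) /=; apply: eq_bigr => k _.
  by rewrite conjcM conjc_inv omegaXV invrK sF conjcK omega_tidx.
move=> k.
have -> : \sum_(l < N) w ^+ (k * l) * G l =
   (N%:R)^-1 * \sum_(k' < N) F k' * \sum_(l < N) w ^+ (l * k) * (w ^+ (l * k'))^-1.
  rewrite /G; under eq_bigr do rewrite mulrCA mulr_sumr.
  rewrite -mulr_sumr exchange_big /=; congr (_ * _); apply: eq_bigr => k' _.
  rewrite mulr_sumr; apply: eq_bigr => l _.
  by rewrite !(mulnC l); exact: mulACl.
set S := (X in _ * X = _).
have -> : S = \sum_(k' < N) F k' * ((k == k')%:R * N%:R).
  by apply: eq_bigr => k' _; rewrite omega_orth.
rewrite (bigD1 k) //= eqxx big1 ?addr0; last first.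
  by move=> k' /negbTE; rewrite eq_sym => ->; rewrite mul0r mulr0.
by rewrite mul1r mulrCA mulVf ?NC0 // mulr1.
Qed.

Lemma tfftE m p (X : tensor R m p N) k i j : tfft X k i j = dft (X i j) k.
Proof. by rewrite mxE. Qed.

Lemma tifft_tfft m p (X : tensor R m p N) : tifft (tfft X) = X.
Proof.
apply: funext => i; apply: funext => j; apply: funext => l.
rewrite /tifft; under eq_bigr do rewrite mxE.
exact: inv1.
Qed.

Definition symM m p (F : 'I_N -> 'M[C]_(m, p)) :=
  forall k i j, F (tidx k) i j = conjc (F k i j).

Lemma tfft_tifft m p (F : 'I_N -> 'M[C]_(m, p)) : symM F -> tfft (tifft F) = F.
Proof.
move=> sF; apply: funext => k; apply/matrixP => i j; rewrite mxE /tifft.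
have [h1 h2] := inv2 (F := fun k => F k i j) (fun k => sF k i j).
under eq_bigr do rewrite h1.
exact: h2.
Qed.

Lemma tfft_inj m p (X Y : tensor R m p N) : (forall k, tfft X k = tfft Y k) -> X = Y.
Proof.
by move=> h; rewrite -(tifft_tfft X) -(tifft_tfft Y); congr tifft; apply: funext.
Qed.

Lemma dft_tidx f k : dft f (tidx k) = conjc (dft f k).
Proof.
rewrite /dft conjc_sum; apply: eq_bigr => l _.
by rewrite conjcM cplx_conj omegaXV omega_tidx.
Qed.

Lemma sym_tfft m p (X : tensor R m p N) : symM (tfft X).
Proof. by move=> k i j; rewrite !mxE; exact: dft_tidx. Qed.

Lemma sym_mul m p q (F : 'I_N -> 'M[C]_(m, p)) (G : 'I_N -> 'M[C]_(p, q)) :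
  symM F -> symM G -> symM (fun k => F k *m G k).
Proof.
move=> hF hG k i j; rewrite !mxE conjc_sum; apply: eq_bigr => x _.
by rewrite hF hG conjcM.
Qed.

Lemma sym_kron m1 m2 p1 p2 (F : 'I_N -> 'M[C]_(m1, m2)) (G : 'I_N -> 'M[C]_(p1, p2)) :
  symM F -> symM G -> symM (fun k => tensmx (F k) (G k)).
Proof. by move=> hF hG k i j; rewrite !mxE hF hG conjcM. Qed.

Lemma tfft_tprod m p q (X : tensor R m p N) (Y : tensor R p q N) k :
  tfft (tprod X Y) k = tfft X k *m tfft Y k.
Proof. by rewrite /tprod tfft_tifft //; apply: sym_mul; apply: sym_tfft. Qed.

Lemma tfft_tkron m1 m2 p1 p2 (X : tensor R m1 m2 N) (Y : tensor R p1 p2 N) k :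
  tfft (tkron X Y) k = tensmx (tfft X k) (tfft Y k).
Proof. by rewrite /tkron tfft_tifft //; apply: sym_kron; apply: sym_tfft. Qed.

Lemma tfft_tadd m p (X Y : tensor R m p N) k : tfft (tadd X Y) k = tfft X k + tfft Y k.
Proof.
apply/matrixP => i j; rewrite !mxE /dft -big_split; apply: eq_bigr => l _.
by rewrite /tadd cplxD mulrDr.
Qed.

Lemma tfft_ttr m p (X : tensor R m p N) k i j :
  tfft (ttr X) k i j = conjc (tfft X k j i).
Proof.
rewrite !mxE /ttr /dft conjc_sum (reindex_inj (can_inj tidxK)) /=.
apply: eq_bigr => l _; rewrite tidxK conjcM cplx_conj omegaXV.
by rewrite mulnC omega_tidx mulnC.
Qed.

Lemma tfft_tid s k : tfft (@tid R s N) k = 1%:M.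
Proof.
apply/matrixP => i j; rewrite !mxE /dft (bigD1 ord0) //= big1 ?addr0.
  by rewrite muln0 expr0 mul1r /tid /= andbT; case: (i == j).
move=> l /negbTE; rewrite -(inj_eq val_inj) /= => h.
by rewrite /tid h andbF mulr0.
Qed.

Lemma dft_etube k : dft (@etube R N ord0 ord0) k = 1.
Proof.
rewrite /dft (bigD1 ord0) //= big1 ?addr0.
  by rewrite muln0 expr0 mul1r.
move=> l /negbTE; rewrite -(inj_eq val_inj) /= => h.
by rewrite /etube h mulr0.
Qed.

Lemma tfft_tdivt m p (t : tube R N) (W : tensor R m p N) k i j :
  tfft (tdivt t W) k i j = tfft t k ord0 ord0 * tfft W k i j.
Proof.
transitivity (tfft (tprod t (fun (_ _ : 'I_1) => W i j)) k ord0 ord0).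
  by rewrite !mxE.
by rewrite tfft_tprod mxE big_ord1 !tfftE.
Qed.

Lemma conj_ge0fix (z : C) : 0 <= z -> conjc z = z.
Proof. by case: z => x y /ger0_Im /= ->; rewrite /conjc oppr0. Qed.

Lemma frob_ge0 m p (M : 'M[C]_(m, p)) : 0 <= frob M.
Proof.
by rewrite /frob sqrtC_ge0 sumr_ge0 // => i _; rewrite sumr_ge0 // => j _; rewrite exprn_ge0.
Qed.

Lemma frob_conj m p (M : 'M[C]_(m, p)) :
  frob (\matrix_(i, j) conjc (M i j)) = frob M.
Proof.
rewrite /frob; congr sqrtC; apply: eq_bigr => i _; apply: eq_bigr => j _.
by rewrite mxE normcJ.
Qed.

Lemma frob_tidx m p (W : tensor R m p N) k :
  frob (tfft W (tidx k)) = conjc (frob (tfft W k)).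
Proof.
rewrite conj_ge0fix ?frob_ge0 // -(frob_conj (tfft W k)); congr frob.
by apply/matrixP => i j; rewrite [RHS]mxE sym_tfft.
Qed.

Lemma norm_fst m p (W : tensor R m p N) k :
  tfft (normalization W).1 k = (frob (tfft W k))^-1 *: tfft W k.
Proof.
rewrite /normalization /= tfft_tifft // => k' i j.
  rewrite !mxE frob_tidx; change (\sum_(l < N) w ^+ (tidx k' * l) * cplx (W i j l)) with (dft (W i j) (tidx k')).
  by rewrite dft_tidx conjcM conjc_inv.
Qed.

Lemma norm_snd m p (W : tensor R m p N) k :
  tfft (normalization W).2 k = (frob (tfft W k))%:M.
Proof.
rewrite /normalization /= tfft_tifft // => k' i j.
by rewrite !mxE frob_tidx; case: (i == j); rewrite ?mulr1n ?mulr0n ?conjc0.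
Qed.

Lemma norm_spec m p (W Q : tensor R m p N) (t : tube R N) k :
  nobreak W -> (Q, t) = normalization W ->
  tfft W k = tfft t k ord0 ord0 *: tfft Q k /\
  conjc (tfft t k ord0 ord0) = tfft t k ord0 ord0.
Proof.
move=> nb [-> ->]; rewrite norm_fst norm_snd mxE /= mulr1n; split.
  by rewrite scalerA mulfV ?scale1r //; apply: nb.
by rewrite conj_ge0fix ?frob_ge0.
Qed.

Lemma tfft_tsub m p (X Y : tensor R m p N) k i j :
  tfft (tsub X Y) k i j = tfft X k i j - tfft Y k i j.
Proof.
rewrite !mxE /dft -sumrB; apply: eq_bigr => l _.
by rewrite /tsub cplxB mulrBr.
Qed.

Lemma dft0 k : dft (fun _ => 0) k = 0.
Proof. by rewrite /dft big1 // => l _; rewrite mulr0. Qed.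

Lemma sum_delta_nat m (g : nat -> C) x : (x < m)%N ->
  \sum_(i < m) g i * (i == x :> nat)%:R = g x.
Proof.
move=> h; rewrite (bigD1 (Ordinal h)) //= eqxx mulr1 big1 ?addr0 //.
by move=> i; rewrite -(inj_eq val_inj) /= => /negbTE ->; rewrite mulr0.
Qed.

Lemma sum_delta_nat0 m (g : nat -> C) x : (m <= x)%N ->
  \sum_(i < m) g i * (i == x :> nat)%:R = 0.
Proof.
move=> h; rewrite big1 // => i _.
have -> : (i == x :> nat) = false by apply/negbTE; rewrite neq_ltn (leq_trans (ltn_ord i) h).
by rewrite mulr0.
Qed.

Lemma sum_pair m p (F : 'I_(m * p) -> C) :
  \sum_(q < m * p) F q = \sum_(i < m) \sum_(d < p) F (mxtens_index (i, d)).
Proof.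
rewrite pair_big /=.
apply: (reindex (fun x : 'I_m * 'I_p => mxtens_index (x.1, x.2))) => /=.
exists (@mxtens_unindex m p) => q _.
  by rewrite mxtens_indexK; case: q.
by rewrite -surjective_pairing mxtens_unindexK.
Qed.

Lemma unindex_cast s (c : 'I_s) :
  mxtens_unindex (cast_ord (esym (mul1n s)) c) = (ord0, c).
Proof.
have cs := ltn_ord c.
congr pair; apply: val_inj => /=; first by rewrite divn_small.
by rewrite modn_small.
Qed.

Section Main.
Variables (n1 n2 s k : nat) (A : tensor R n1 n2 N) (B : tensor R n1 s N).
Variables (U : nat -> tensor R n1 s N) (V : nat -> tensor R n2 s N).
Variables (a b : nat -> tube R N).
Hypothesis H : GK_run A B k U V a b.
Variable z : 'I_N.

Local Notation Uh j := (tfft (U j) z).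
Local Notation Vh j := (tfft (V j) z).
Local Notation al j := (tfft (a j) z ord0 ord0).
Local Notation be j := (tfft (b j) z ord0 ord0).

Lemma F0 r c : tfft B z r c = al 1 * Uh 1 r c.
Proof.
case: H => _ nbB e1 _.
by have [-> _] := norm_spec z nbB e1; rewrite mxE.
Qed.

Lemma F0r : conjc (al 1) = al 1.
Proof. by case: H => _ nbB e1 _; have [_ ->] := norm_spec z nbB e1. Qed.

Lemma FV0 r c : Vh 0 r c = 0.
Proof. by case: H => -> _ _ _; rewrite tfftE dft0. Qed.

Lemma F1 j r c : (1 <= j <= k)%N ->
  be j * Vh j r c = (tfft (ttr A) z *m Uh j) r c - al j * Vh j.-1 r c.
Proof.
move=> hj; case: H => _ _ _ /(_ j hj) /= [nb [e _]].
have [h _] := norm_spec z nb e.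
move: (congr1 (fun M : 'M[C]_(n2, s) => M r c) h); rewrite /= tfft_tsub tfft_tprod tfft_tdivt => h2.
by rewrite h2 [RHS]mxE.
Qed.

Lemma F1r j : (1 <= j <= k)%N -> conjc (be j) = be j.
Proof.
move=> hj; case: H => _ _ _ /(_ j hj) /= [nb [e _]].
by have [_ ->] := norm_spec z nb e.
Qed.

Lemma F2 j r c : (1 <= j <= k)%N ->
  al j.+1 * Uh j.+1 r c = (tfft A z *m Vh j) r c - be j * Uh j r c.
Proof.
move=> hj; case: H => _ _ _ /(_ j hj) /= [_ [_ [nb e]]].
have [h _] := norm_spec z nb e.
move: (congr1 (fun M : 'M[C]_(n1, s) => M r c) h); rewrite /= tfft_tsub tfft_tprod tfft_tdivt => h2.
by rewrite h2 [RHS]mxE.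
Qed.

Lemma F2r j : (1 <= j <= k)%N -> conjc (al j.+1) = al j.+1.
Proof.
move=> hj; case: H => _ _ _ /(_ j hj) /= [_ [_ [nb e]]].
by have [_ ->] := norm_spec z nb e.
Qed.


Lemma sum_at m (P : 'I_m -> C) (x : 'I_m) :
  (forall i : 'I_m, (i != x :> nat) -> P i = 0) -> \sum_i P i = P x.
Proof.
move=> h; rewrite (bigD1 x) //= big1 ?addr0 // => i ix; apply: h.
Qed.

Lemma sum_0 m (P : 'I_m -> C) : (forall i, P i = 0) -> \sum_i P i = 0.
Proof. by move=> h; rewrite big1. Qed.

Lemma prod_bcat m m' p (Y : tensor R m m' N) (G : 'I_p -> tensor R m' s N) r j c :
  tfft (tprod Y (bcat G)) z r (mxtens_index (j, c)) = (tfft Y z *m tfft (G j) z) r c.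
Proof.
rewrite tfft_tprod [LHS]mxE [RHS]mxE; apply: eq_bigr => x _.
by rewrite !tfftE /bcat mxtens_indexK.
Qed.

Lemma prod_bcat_kron m p q (F : 'I_p -> tensor R m s N) (X : tensor R p q N) r
  (j : 'I_q) (c : 'I_s) :
  tfft (tprod (bcat F) (tkron X (@tid R s N))) z r (mxtens_index (j, c)) =
  \sum_(i < p) tfft (F i) z r c * tfft X z i j.
Proof.
rewrite tfft_tprod mxE sum_pair; apply: eq_bigr => i _.
rewrite (sum_at (x := c)).
  rewrite tfft_tkron tfft_tid [tensmx _ _ _ _]mxE !mxtens_indexK /= [1%:M _ _]mxE eqxx mulr1n mulr1.
  by rewrite !tfftE /bcat mxtens_indexK.
move=> d dc; rewrite tfft_tkron tfft_tid [tensmx _ _ _ _]mxE !mxtens_indexK /= [1%:M _ _]mxE.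
by rewrite (negbTE (dc : d != c)) mulr0 mulr0.
Qed.

Lemma dft_Ctil (i : 'I_k.+1) (j : 'I_k) :
  tfft (@Ctil R N k a b) z i j =
  (i == j :> nat)%:R * be j.+1 + (i == j.+1 :> nat)%:R * al j.+2.
Proof.
rewrite tfftE /Ctil.
case: (eqVneq (i : nat) j) => [e|ne].
  rewrite e.
  have -> : (val j == (val j).+1) = false by apply/negbTE; lia.
  by rewrite mulr1n mulr0n mul1r mul0r addr0 tfftE.
rewrite mulr0n mul0r add0r.
case: (eqVneq (i : nat) j.+1) => [e|ne2].
  by rewrite mulr1n mul1r tfftE.
by rewrite mulr0n mul0r dft0.
Qed.

Lemma dft_Cmat (i j : 'I_k) :
  tfft (@Cmat R N k a b) z i j =
  (i == j :> nat)%:R * be j.+1 + (i == j.+1 :> nat)%:R * al j.+2.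
Proof.
by rewrite -(dft_Ctil (widen_ord (leqnSn k) i)) !tfftE.
Qed.

Lemma claim1 r (j : 'I_k) (c : 'I_s) :
  tfft (tprod A (bcat (fun j : 'I_k => V j.+1))) z r (mxtens_index (j, c)) =
  tfft (tprod (bcat (fun j : 'I_k.+1 => U j.+1)) (tkron (@Ctil R N k a b) (@tid R s N))) z
    r (mxtens_index (j, c)).
Proof.
rewrite prod_bcat prod_bcat_kron.
under eq_bigr do rewrite dft_Ctil mulrDr.
rewrite big_split /=.
have jk := ltn_ord j.
rewrite (sum_at (x := widen_ord (leqnSn k) j)); last first.
  by move=> i /negbTE /= ->; rewrite mulr0n mul0r mulr0.
rewrite (sum_at (x := lift ord0 j)); last first.
  by move=> i; rewrite lift0 => /negbTE ->; rewrite mulr0n mul0r mulr0.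
have e1 : (widen_ord (leqnSn k) j : nat) = j by [].
have e2 : (lift ord0 j : nat) = j.+1 by [].
rewrite e1 e2 !eqxx !mulr1n !mul1r.
rewrite [Uh j.+2 r c * _]mulrC F2; last by rewrite ltn_ord.
by rewrite [Uh j.+1 r c * _]mulrC addrC subrK.
Qed.


Lemma tfft_castr m m' p (e : m = m') (X : tensor R m p N) i j :
  tfft (castr e X) z i j = tfft X z (cast_ord (esym e) i) j.
Proof. by rewrite !tfftE. Qed.

Lemma tfft_castc m p p' (e : p = p') (X : tensor R m p N) i j :
  tfft (castc e X) z i j = tfft X z i (cast_ord (esym e) j).
Proof. by rewrite !tfftE. Qed.

Lemma tfft_aEk (j : 'I_k) :
  tfft (tprod (a k.+1) (@Ek R k N)) z ord0 j = al k.+1 * (j == k.-1 :> nat)%:R.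
Proof.
rewrite tfft_tprod mxE big_ord1; congr (_ * _).
rewrite tfftE /Ek; case: eqP => _; first by rewrite dft_etube.
by rewrite dft0.
Qed.

Lemma tfft_E1a (i : 'I_k.+1) :
  tfft (tprod (@E1 R k N) (a 1%N)) z i ord0 = (i == 0%N :> nat)%:R * al 1.
Proof.
rewrite tfft_tprod mxE big_ord1; congr (_ * _).
rewrite tfftE /E1; case: eqP => _; first by rewrite dft_etube.
by rewrite dft0.
Qed.

Lemma claim2 r (j : 'I_k) (c : 'I_s) :
  tfft (tprod (bcat (fun j : 'I_k.+1 => U j.+1)) (tkron (@Ctil R N k a b) (@tid R s N))) z
    r (mxtens_index (j, c)) =
  tfft (tadd (tprod (bcat (fun j : 'I_k => U j.+1)) (tkron (@Cmat R N k a b) (@tid R s N)))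
               (tprod (U k.+1)
                  (castr (mul1n s) (tkron (tprod (a k.+1) (@Ek R k N)) (@tid R s N))))) z
    r (mxtens_index (j, c)).
Proof.
rewrite tfft_tadd [RHS]mxE !prod_bcat_kron.
under eq_bigr do rewrite dft_Ctil mulrDr.
rewrite big_split /=.
have jk := ltn_ord j.
rewrite (sum_at (x := widen_ord (leqnSn k) j)); last first.
  by move=> i /negbTE /= ->; rewrite mulr0n mul0r mulr0.
rewrite (sum_at (x := lift ord0 j)); last first.
  by move=> i; rewrite lift0 => /negbTE ->; rewrite mulr0n mul0r mulr0.
have e1 : (widen_ord (leqnSn k) j : nat) = j by [].
have e2 : (lift ord0 j : nat) = j.+1 by [].
rewrite e1 e2 !eqxx !mulr1n !mul1r.
under eq_bigr do rewrite dft_Cmat mulrDr.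
rewrite big_split /=.
rewrite (sum_at (x := j)); last first.
  by move=> i /negbTE /= ->; rewrite mulr0n mul0r mulr0.
rewrite eqxx mulr1n mul1r.
have -> : tfft (tprod (U k.+1) (castr (mul1n s) (tkron (tprod (a k.+1) (@Ek R k N)) (@tid R s N))))
   z r (mxtens_index (j, c)) = Uh k.+1 r c * (al k.+1 * (j == k.-1 :> nat)%:R).
  rewrite tfft_tprod mxE (sum_at (x := c)).
    rewrite tfft_castr tfft_tkron [tensmx _ _ _ _]mxE unindex_cast mxtens_indexK /=.
    by rewrite tfft_aEk tfft_tid [1%:M _ _]mxE eqxx mulr1n mulr1.
  move=> d dc.
  rewrite tfft_castr tfft_tkron [tensmx _ _ _ _]mxE unindex_cast mxtens_indexK /=.
  by rewrite tfft_tid [1%:M _ _]mxE (negbTE (dc : d != c)) mulr0n !mulr0.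
case: (ltnP j.+1 k) => hj.
  rewrite (sum_at (x := Ordinal hj)); last first.
    by move=> i /negbTE /= ->; rewrite mulr0n mul0r mulr0.
  have -> : (j == k.-1 :> nat) = false by apply/negbTE; lia.
  by rewrite /= eqxx mulr1n mul1r mulr0n !mulr0 addr0.
rewrite (sum_0 (P := fun i : 'I_k => Uh i.+1 r c * ((i == j.+1 :> nat)%:R * al j.+2))); last first.
  move=> i; have -> : (i == j.+1 :> nat) = false by apply/negbTE; have := ltn_ord i; lia.
  by rewrite mulr0n mul0r mulr0.
have -> : (j == k.-1 :> nat) = true by apply/eqP; lia.
have ek : k.+1 = j.+2 by lia.
by rewrite mulr1n mulr1 addr0 ek.
Qed.

Lemma claim3 r (j : 'I_k) (c : 'I_s) :
  tfft (tprod (ttr A) (bcat (fun j : 'I_k => U j.+1))) z r (mxtens_index (j, c)) =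
  tfft (tprod (bcat (fun j : 'I_k => V j.+1)) (tkron (ttr (@Cmat R N k a b)) (@tid R s N))) z
    r (mxtens_index (j, c)).
Proof.
rewrite prod_bcat prod_bcat_kron.
rewrite (eq_bigr (fun i : 'I_k => Vh i.+1 r c * ((i == j :> nat)%:R * be i.+1) +
                   Vh i.+1 r c * ((j == i.+1 :> nat)%:R * al i.+2))); last first.
  move=> i _; rewrite tfft_ttr dft_Cmat conjcD !conjcM !conjc_nat F1r ?F2r ?ltn_ord //.
  by rewrite mulrDr eq_sym.
rewrite big_split /=.
rewrite (sum_at (x := j)); last first.
  by move=> i /negbTE /= ->; rewrite mulr0n mul0r mulr0.
rewrite eqxx mulr1n mul1r [Vh j.+1 r c * _]mulrC F1 ?ltn_ord //=.
case: j => [[|j'] hj] /=.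
  rewrite sum_0 ?FV0 ?mulr0 ?subr0 ?addr0 //.
  by move=> i; rewrite mulr0n mul0r mulr0.
rewrite (sum_at (x := Ordinal (ltnW hj))); last first.
  move=> i /= ij; have -> : (j'.+1 == i.+1 :> nat) = false by apply/negbTE; lia.
  by rewrite mulr0n mul0r mulr0.
by rewrite /= eqxx mulr1n mul1r [Vh j'.+1 r c * _]mulrC subrK.
Qed.

Lemma claim4 r (c : 'I_s) :
  tfft B z r c =
  tfft (castc (mul1n s) (tprod (bcat (fun j : 'I_k.+1 => U j.+1))
          (tkron (tprod (@E1 R k N) (a 1%N)) (@tid R s N)))) z r c.
Proof.
have ec : cast_ord (esym (mul1n s)) c = mxtens_index (ord0, c).
  by rewrite -unindex_cast mxtens_unindexK.
rewrite tfft_castc ec prod_bcat_kron.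
rewrite (sum_at (x := ord0)); last first.
  by move=> i /negbTE; rewrite tfft_E1a => ->; rewrite mulr0n mul0r mulr0.
by rewrite tfft_E1a /= mulr1n mul1r F0 mulrC.
Qed.
End Main.
End Omega.

Theorem proposition13 (R : realType) (n1 n2 n3 s k : nat)
  (A : tensor R n1 n2 n3) (B : tensor R n1 s n3)
  (U : nat -> tensor R n1 s n3) (V : nat -> tensor R n2 s n3)
  (a b : nat -> tube R n3) :
  GK_run A B k U V a b ->
  let Uk := bcat (fun j : 'I_k => U j.+1) in
  let Uk1 := bcat (fun j : 'I_k.+1 => U j.+1) in
  let Vk := bcat (fun j : 'I_k => V j.+1) in
  [/\ tprod A Vk = tprod Uk1 (tkron (@Ctil R n3 k a b) (@tid R s n3)),
      tprod Uk1 (tkron (@Ctil R n3 k a b) (@tid R s n3))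
        = tadd (tprod Uk (tkron (@Cmat R n3 k a b) (@tid R s n3)))
               (tprod (U k.+1)
                  (castr (mul1n s) (tkron (tprod (a k.+1) (@Ek R k n3)) (@tid R s n3)))),
      tprod (ttr A) Uk = tprod Vk (tkron (ttr (@Cmat R n3 k a b)) (@tid R s n3)) &
      B = castc (mul1n s) (tprod Uk1 (tkron (tprod (@E1 R k n3) (a 1%N)) (@tid R s n3)))].
Proof.
case: n3 A B U V a b => [|n] A B U V a b H Uk Uk1 Vk.
  by split; apply: funext => i; apply: funext => j; apply: funext => -[].
rewrite /Uk /Uk1 /Vk; split.
- apply: tfft_inj => z; apply/matrixP => r q; case: (mxtens_indexP q) => j c.
  exact: (claim1 H).
- apply: tfft_inj => z; apply/matrixP => r q; case: (mxtens_indexP q) => j c.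
  exact: claim2.
- apply: tfft_inj => z; apply/matrixP => r q; case: (mxtens_indexP q) => j c.
  exact: (claim3 H).
- apply: tfft_inj => z; apply/matrixP => r c.
  exact: (claim4 H).
Qed.
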